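(* Let $N\ge2$, $g\ge1$, and let $A(z)=\sum_{k=0}^{g-1}z^kA^{(k)}$ ($A^{(g-1)}\ne0$) be a purely non-diagonal polynomial loop $\mathbb{T}\to\mathrm{U}_N(\mathbb{C})$ of genus $g$. Let $T_i$, $i=0,\dots,N-1$, be the operators on $L^2(\mathbb{T})$ given by $(T_if)(z)=m_i(z)f(z^N)$, $m_i(z)=\sum_{j=0}^{N-1}A_{i,j}(z^N)z^j$. Let $r_0=\lfloor (gN-1)/(N-1)\rfloor$, $\mathcal{K}=\operatorname{span}\{z^{-k}:0\le k\le r_0\}$, $P$ the orthogonal projection onto $\mathcal{K}$, $V_i:=PT_i|_{\mathcal{K}}\in\mathcal{B}(\mathcal{K})$, and $\sigma\colon\mathcal{B}(\mathcal{K})\to\mathcal{B}(\mathcal{K})$, $\sigma(X)=\sum_iV_iXV_i^*$. Then there is no faithful state $\rho$ on $\mathcal{B}(\mathcal{K})$ satisfying $\rho\circ\sigma=\rho$.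
   Context: A polynomial loop $D\colon\mathbb{T}\to\mathrm{U}_d(\mathbb{C})$ is diagonal if $D(z)=V\,\mathrm{diag}(z^{n_0},\dots,z^{n_{d-1}})$ for some $V\in\mathrm{U}_d(\mathbb{C})$ and integers $n_i\ge0$. A polynomial loop $A\colon\mathbb{T}\to\mathrm{U}_N(\mathbb{C})$ is purely non-diagonal if there is no decomposition $N=d_0+b+d_1$ with $d_0>0$ or $d_1>0$, diagonal loops $D_0,D_1$ of sizes $d_0,d_1$, a polynomial loop $B\colon\mathbb{T}\to\mathrm{U}_b(\mathbb{C})$ and $V\in\mathrm{U}_N(\mathbb{C})$ with $A(z)=V\,(D_0(z)\oplus B(z)\oplus D_1(z))$ (block diagonal). $A_{i,j}(z)$ are the entries of $A(z)$; $\mathbb{T}$ is the unit circle with normalized Haar measure. *)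

(* Defs.v *)
From HB Require Import structures.
From mathcomp Require Import all_boot all_order all_algebra.
From mathcomp Require Import complex.
From mathcomp Require Import reals.
Set Implicit Arguments. Unset Strict Implicit. Unset Printing Implicit Defensive.
Import Order.TTheory GRing.Theory Num.Theory.
Local Open Scope ring_scope.

Section Defs.
Variable R : realType.
Local Notation C := R[i].

Definition adjmx m n (M : 'M[C]_(m, n)) : 'M[C]_(n, m) := (map_mx Num.conj M)^T.

Definition unitary_mx d (M : 'M[C]_d) : Prop :=
  M *m adjmx M = 1%:M /\ adjmx M *m M = 1%:M.

Definition on_circle (z : C) : Prop := `|z| = 1.

Definition poly_loop d (F : C -> 'M[C]_d) : Prop :=
  (exists (h : nat) (c : nat -> 'M[C]_d),
      forall z, on_circle z -> F z = \sum_(k < h) z ^+ k *: c k) /\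
  (forall z, on_circle z -> unitary_mx (F z)).

Definition diag_loop d (D : C -> 'M[C]_d) : Prop :=
  exists (V : 'M[C]_d) (n : 'I_d -> nat), unitary_mx V /\
    forall z, on_circle z -> D z = V *m diag_mx (\row_i (z ^+ n i)).

Definition block_diag3 d0 b d1 (D0 : 'M[C]_d0) (B : 'M[C]_b) (D1 : 'M[C]_d1)
  : 'M[C]_(d0 + b + d1) :=
  block_mx (block_mx D0 0 0 B) 0 0 D1.

Definition purely_non_diagonal N (A : C -> 'M[C]_N) : Prop :=
  ~ exists (d0 b d1 : nat) (e : (d0 + b + d1)%N = N),
      ((0 < d0)%N \/ (0 < d1)%N) /\
      exists (D0 : C -> 'M[C]_d0) (B : C -> 'M[C]_b) (D1 : C -> 'M[C]_d1)
             (V : 'M[C]_N),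
        diag_loop D0 /\ diag_loop D1 /\ poly_loop B /\ unitary_mx V /\
        forall z, on_circle z ->
          A z = V *m castmx (e, e) (block_diag3 (D0 z) (B z) (D1 z)).

Definition loop_eval N g (Acoef : nat -> 'M[C]_N) (z : C) : 'M[C]_N :=
  \sum_(k < g) z ^+ k *: Acoef k.

Definition entry_poly N g (Acoef : nat -> 'M[C]_N) (i j : 'I_N) : {poly C} :=
  \sum_(k < g) (Acoef k i j)%:P * 'X^k.

Definition m_poly N g (Acoef : nat -> 'M[C]_N) (i : 'I_N) : {poly C} :=
  \sum_(j < N) (entry_poly g Acoef i j \Po 'X^N) * 'X^j.

Definition r0 N g : nat := ((g * N).-1 %/ N.-1)%N.

(* V_i = P T_i |_K, written as a matrix in the orthonormal basis
   e_k = z^{-k} (0 <= k <= r0) of K.  Since (T_i e_k)(z) = m_i(z) z^{-N k},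
   the coefficient of e_m = z^{-m} in T_i e_k is the coefficient of z^{N k - m}
   in m_i (zero if N k < m), and P keeps exactly these coefficients. *)
Definition Vop N g (Acoef : nat -> 'M[C]_N) (i : 'I_N) : 'M[C]_((r0 N g).+1) :=
  \matrix_(m < (r0 N g).+1, k < (r0 N g).+1)
     (if (m <= N * k)%N then (m_poly g Acoef i)`_(N * k - m) else 0).

Definition sigma_map N g (Acoef : nat -> 'M[C]_N) (X : 'M[C]_((r0 N g).+1))
  : 'M[C]_((r0 N g).+1) :=
  \sum_(i < N) (Vop g Acoef i *m X *m adjmx (Vop g Acoef i)).

Definition is_state n (rho : 'M[C]_n -> C) : Prop :=
  (forall (a : C) (X Y : 'M[C]_n), rho (a *: X + Y) = a * rho X + rho Y) /\
  (forall X : 'M[C]_n, 0 <= rho (adjmx X *m X)) /\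
  rho 1%:M = 1.

Definition faithful n (rho : 'M[C]_n -> C) : Prop :=
  forall X : 'M[C]_n, rho (adjmx X *m X) = 0 -> X = 0.

End Defs.

Arguments loop_eval {R N} g Acoef z.
Arguments entry_poly {R N} g Acoef i j.
Arguments m_poly {R N} g Acoef i.
Arguments Vop {R N} g Acoef i.
Arguments sigma_map {R N} g Acoef X.

(* Main.v *)
Require Import Defs.
From HB Require Import structures.
From mathcomp Require Import all_boot all_order all_algebra.
From mathcomp Require Import complex.
From mathcomp Require Import reals.
From mathcomp Require Import ring.
Import Order.TTheory GRing.Theory Num.Theory.
Local Open Scope ring_scope.

Section Aux.
Variable R : realType.
Local Notation C := R[i].

Lemma circ_pt (t : nat) : on_circle ((t%:R + 'i) / (t%:R - 'i) : C).
Proof.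
have ec : (t%:R + 'i : C)^* = t%:R - 'i by rewrite rmorphD /= conjC_nat conjCi.
have nz : (t%:R + 'i : C) != 0.
  apply/negP => /eqP h.
  have h2 : (t%:R - 'i : C) = 0 by rewrite -ec h conjC0.
  have : (t%:R + 'i : C) - (t%:R - 'i) = 2%:R * 'i by ring.
  rewrite h h2 subrr => /esym/eqP; rewrite mulf_eq0 pnatr_eq0 /= => /eqP hi.
  by move: (neq0Ci C); rewrite hi eqxx.
rewrite /on_circle -ec normf_div norm_conjC divff // normr_eq0; exact: nz.
Qed.

Lemma circ_inj : injective (fun t : nat => (t%:R + 'i) / (t%:R - 'i) : C).
Proof.
have nz : forall t : nat, (t%:R - 'i : C) != 0.
  move=> t; apply/negP => /eqP h.
  have : (t%:R - 'i : C)^* = t%:R + 'i by rewrite rmorphB /= conjC_nat conjCi opprK.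
  rewrite h conjC0 => /esym h2.
  have : (t%:R + 'i : C) - (t%:R - 'i) = 2%:R * 'i by ring.
  rewrite h h2 subrr => /esym/eqP; rewrite mulf_eq0 pnatr_eq0 /= => /eqP hi.
  by move: (neq0Ci C); rewrite hi eqxx.
move=> s t /= /eqP; rewrite eqr_div ?nz // => /eqP h.
have : (2%:R * 'i) * ((t%:R : C) - s%:R) = 0.
  have e : (2%:R * 'i) * ((t%:R : C) - s%:R) =
    (s%:R + 'i) * (t%:R - 'i) - (t%:R + 'i) * (s%:R - 'i).
    have ii : ('i : C) * 'i = -1 by rewrite -expr2 sqrCi.
    ring.
  by rewrite e h subrr.
move/eqP; rewrite mulf_eq0 mulf_eq0 pnatr_eq0 (negbTE (neq0Ci C)) /= subr_eq0 eqr_nat.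
by move/eqP->.
Qed.

Lemma poly_circle0 (p : {poly C}) :
  (forall z, on_circle z -> p.[z] = 0) -> p = 0.
Proof.
move=> h; apply/eqP; apply/negPn/negP => pn0.
pose rs := [seq (t%:R + 'i) / (t%:R - 'i) : C | t <- iota 0 (size p)].
have r1 : all (root p) rs by apply/allP => x /mapP [t _ ->]; apply/rootP/h/circ_pt.
have r2 : uniq rs by rewrite map_inj_uniq ?iota_uniq //; apply: circ_inj.
by have := max_poly_roots pn0 r1 r2; rewrite size_map size_iota ltnn.
Qed.
End Aux.

Section Aux2.
Variable R : realType.
Local Notation C := R[i].

Lemma col_norm (g' : nat) (I : finType) (c : nat -> I -> C) :
  (forall z : C, on_circle z ->
     \sum_i (\sum_(k < g'.+1) c k i * z ^+ k) * (\sum_(k < g'.+1) c k i * z ^+ k)^* = 1) ->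
  \sum_i \sum_(k < g'.+1) c k i * (c k i)^* = 1.
Proof.
move=> h.
pose P i := \poly_(k < g'.+1) c k i.
pose Q i := \poly_(m < g'.+1) (c (g' - m)%N i)^*.
pose q := \sum_i P i * Q i - 'X^g'.
have hq : q = 0.
  apply: poly_circle0 => z hz.
  have zc : z * z^* = 1 by rewrite -normCK hz expr1n.
  have HQ : forall i, (Q i).[z] = z ^+ g' * ((P i).[z])^*.
    move=> i; rewrite !horner_poly rmorph_sum mulr_sumr.
    rewrite [RHS](reindex_inj rev_ord_inj); apply: eq_bigr => k _ /=.
    rewrite subSS rmorphM rmorphXn /=.
    have ez : z ^+ g' = z ^+ k * z ^+ (g' - k) by rewrite -exprD subnKC // -ltnS.
    have H1 : z ^+ (g' - k) * z^* ^+ (g' - k) = 1 by rewrite -exprMn zc expr1n.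
    rewrite ez; move: H1.
    move: (z ^+ k) (z ^+ (g' - k)) (z^* ^+ (g' - k)) (c (g' - k)%N i)^* => a b w' x H1.
    transitivity (x * a * (b * w')); first by rewrite H1 mulr1.
    ring.
  rewrite /q hornerD hornerN horner_sum hornerXn.
  under eq_bigr do rewrite hornerM HQ.
  transitivity (z ^+ g' * (\sum_i (P i).[z] * ((P i).[z])^* - 1)).
    rewrite mulrBr mulr1 mulr_sumr; congr (_ - _); apply: eq_bigr => i _.
    by rewrite mulrCA.
  by under eq_bigr do rewrite horner_poly; rewrite h // subrr mulr0.
have := congr1 (fun p : {poly C} => p`_g') hq.
rewrite coef0 coefB coefXn eqxx coef_sum => /eqP; rewrite subr_eq0 => /eqP h'.
apply: eq_trans _ h'; apply: eq_bigr => i _; rewrite coefM; apply: eq_bigr => j _.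
rewrite !coef_poly ltn_ord ltnS leq_subr subKn // -ltnS //.
Qed.

Lemma sum_tail0 (g' : nat) (I : finType) (c : nat -> I -> C) :
  \sum_i \sum_(k < g'.+1) c k i * (c k i)^* = 1 ->
  \sum_i c 0%N i * (c 0%N i)^* = 1 ->
  forall k i, (0 < k)%N -> (k < g'.+1)%N -> c k i = 0.
Proof.
move=> h1 h0 k i k0 kg.
have : \sum_i \sum_(k < g') c k.+1 i * (c k.+1 i)^* = 0.
  move: h1; under eq_bigr do rewrite big_ord_recl.
  rewrite big_split /= h0 => /(congr1 (fun x => x - 1)).
  by rewrite addrC addrK subrr.
move/psumr_eq0P => H.
have := H (fun i _ => sumr_ge0 _ (fun j _ => mul_conjC_ge0 _)) i isT.
move/psumr_eq0P => H2.
case: k k0 kg => // k _ kg.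
have := H2 (fun j _ => mul_conjC_ge0 _) (Ordinal (kg : (k < g')%N)) isT.
by move=> /eqP; rewrite mul_conjC_eq0 => /eqP.
Qed.
End Aux2.

Section Aux3.
Variable R : realType.
Local Notation C := R[i].

Lemma adjmxE m n (M : 'M[C]_(m, n)) i j : adjmx M i j = (M j i)^*.
Proof. by rewrite /adjmx !mxE. Qed.

Lemma adjmx1 n : adjmx (1%:M : 'M[C]_n) = 1%:M.
Proof. by apply/matrixP => i j; rewrite adjmxE !mxE eq_sym rmorph_nat. Qed.

Lemma adjmxK m n (M : 'M[C]_(m, n)) : adjmx (adjmx M) = M.
Proof. by apply/matrixP => i j; rewrite !adjmxE conjCK. Qed.

Lemma adjmxM m n p (M : 'M[C]_(m, n)) (P : 'M[C]_(n, p)) :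
  adjmx (M *m P) = adjmx P *m adjmx M.
Proof. by rewrite /adjmx map_mxM trmx_mul. Qed.

Lemma adjmx_block m1 m2 n1 n2 (a : 'M[C]_(m1, n1)) (b : 'M[C]_(m1, n2))
  (c : 'M[C]_(m2, n1)) (d : 'M[C]_(m2, n2)) :
  adjmx (block_mx a b c d) = block_mx (adjmx a) (adjmx c) (adjmx b) (adjmx d).
Proof. by rewrite /adjmx map_block_mx tr_block_mx. Qed.

Lemma unitary_mul n (M P : 'M[C]_n) :
  unitary_mx M -> unitary_mx P -> unitary_mx (M *m P).
Proof.
move=> [h1 h2] [h3 h4]; split; rewrite adjmxM.
  by rewrite mulmxA -(mulmxA M) h3 mulmx1 h1.
by rewrite mulmxA -(mulmxA _ _ M) h2 mulmx1 h4.
Qed.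

Lemma unitary_adj n (M : 'M[C]_n) : unitary_mx M -> unitary_mx (adjmx M).
Proof. by move=> [h1 h2]; split; rewrite adjmxK. Qed.

Lemma castmx_blk0 m (X : 'M[C]_m) (D : 'M[C]_0) (e : (m + 0 = m)%N) :
  castmx (e, e) (block_mx X 0 0 D) = X.
Proof.
apply/matrixP => i j; rewrite castmxE.
have -> : cast_ord (esym e) i = lshift 0 i by apply: val_inj.
have -> : cast_ord (esym e) j = lshift 0 j by apply: val_inj.
by rewrite block_mxEul.
Qed.


Lemma adjmx0 m n : adjmx (0 : 'M[C]_(m, n)) = 0.
Proof. by apply/matrixP => i j; rewrite adjmxE !mxE conjC0. Qed.

Lemma drsub_sum m1 m2 n1 n2 (I : Type) (r : seq I) (P : pred I)
  (F : I -> 'M[C]_(m1 + m2, n1 + n2)) :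
  drsubmx (\sum_(i <- r | P i) F i) = \sum_(i <- r | P i) drsubmx (F i).
Proof. by apply/matrixP => i j; rewrite !mxE !summxE; apply: eq_bigr => k _; rewrite !mxE. Qed.

Lemma drsubZ m1 m2 n1 n2 (a : C) (M : 'M[C]_(m1 + m2, n1 + n2)) :
  drsubmx (a *: M) = a *: drsubmx M.
Proof. by apply/matrixP => i j; rewrite !mxE. Qed.

Lemma blk_decomp n (M : 'M[C]_(1 + n)) :
  (forall i, M i ord0 = (i == ord0)%:R) -> (forall j, M ord0 j = (j == ord0)%:R) ->
  M = block_mx 1%:M 0 0 (drsubmx M).
Proof.
move=> hc hr; rewrite -{1}(submxK M); congr block_mx; apply/matrixP => i j; rewrite !mxE.
- rewrite (ord1 i) (ord1 j).
  have -> : lshift n (ord0 : 'I_1) = ord0 by apply: val_inj.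
  by rewrite hc !eqxx.
- rewrite (ord1 i).
  have -> : lshift n (ord0 : 'I_1) = ord0 by apply: val_inj.
  by rewrite hr.
- rewrite (ord1 j).
  have -> : lshift n (ord0 : 'I_1) = ord0 by apply: val_inj.
  by rewrite hc.
Qed.

Lemma blk_unitary n (Bm : 'M[C]_n) :
  unitary_mx (block_mx (1%:M : 'M[C]_1) 0 0 Bm : 'M_(1 + n)) -> unitary_mx Bm.
Proof.
move=> [h1 h2]; move: h1 h2.
rewrite adjmx_block !mulmx_block adjmx1 !adjmx0 (scalar_mx_block 1 n 1).
rewrite !mul0mx !mulmx0 !add0r => /eq_block_mx [_ _ _ ha] /eq_block_mx [_ _ _ hb].
by split.
Qed.

End Aux3.

Theorem corollary6p10 (R : realType) (N g : nat) (Acoef : nat -> 'M[R[i]]_N) :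
  (2 <= N)%N -> (1 <= g)%N ->
  Acoef g.-1 != 0 ->
  poly_loop (loop_eval g Acoef) ->
  purely_non_diagonal (loop_eval g Acoef) ->
  ~ exists rho : 'M[R[i]]_((r0 N g).+1) -> R[i],
      is_state rho /\ faithful rho /\
      (forall X, rho (sigma_map g Acoef X) = rho X).
Proof.
case: N Acoef => [|[|n]] Acoef //; case: g Acoef => [|g'] Acoef //.
move=> _ _ _ [_ Hun] Hpnd [rho [[Hlin [Hpos H1]] [Hfaith Hinv]]].
set A := loop_eval g'.+1 Acoef in Hun Hpnd.
set r := r0 n.+2 g'.+1 in rho Hlin Hpos H1 Hfaith Hinv *.
have m0 : forall i, (m_poly g'.+1 Acoef i)`_0 = Acoef 0%N i ord0.
  move=> i; rewrite -horner_coef0 /m_poly horner_sum big_ord_recl big1 ?addr0.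
    rewrite hornerM horner_comp hornerXn expr0n /= hornerXn expr0n /= mulr1.
    rewrite /entry_poly horner_sum big_ord_recl big1 ?addr0.
      by rewrite hornerM hornerC hornerXn expr0n mulr1.
    by move=> k _; rewrite hornerM hornerXn expr0n /= mulr0.
  by move=> j _; rewrite hornerM hornerXn expr0n /= mulr0.
have Vcol : forall i (a : 'I_r.+1),
    Vop g'.+1 Acoef i a ord0 = (a == ord0)%:R * Acoef 0%N i ord0.
  move=> i a; rewrite mxE muln0 leqn0.
  have -> : (nat_of_ord a == 0%N) = (a == ord0) by [].
  case: eqP => [->|_]; last by rewrite mul0r.
  by rewrite sub0n m0 mul1r.
pose lam := \sum_(i < n.+2) Acoef 0%N i ord0 * (Acoef 0%N i ord0)^*.
pose Q0 : 'M[R[i]]_r.+1 := delta_mx ord0 ord0.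
have E : forall i (a b : 'I_r.+1),
    (Vop g'.+1 Acoef i *m Q0 *m adjmx (Vop g'.+1 Acoef i)) a b =
    Vop g'.+1 Acoef i a ord0 * (Vop g'.+1 Acoef i b ord0)^*.
  move=> i a b; rewrite /Q0 -(mul_delta_mx (ord0 : 'I_1)) mulmxA.
  rewrite -(mulmxA _ _ (adjmx _)) -colE -rowE mxE big_ord1 !mxE.
  by [].
have Hsig : sigma_map g'.+1 Acoef Q0 = lam *: Q0.
  apply/matrixP => a b; rewrite summxE.
  under eq_bigr do rewrite E !Vcol rmorphM rmorph_nat.
  rewrite !mxE /lam.
  case: (a == ord0); case: (b == ord0) => /=;
    rewrite ?mulr1 ?mulr0; try (by rewrite big1 // => i _; rewrite ?mul0r ?mulr0);
    by apply: eq_bigr => i _; rewrite ?mul1r.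
have rho0 : rho 0 = 0.
  have := Hlin 1 0 0; rewrite scaler0 addr0 mul1r => h.
  by apply: (addrI (rho 0)); rewrite -h addr0.
have rhoZ : forall a X, rho (a *: X) = a * rho X.
  by move=> a X; rewrite -[a *: X]addr0 Hlin rho0 addr0.
have HQ : adjmx Q0 *m Q0 = Q0.
  have -> : adjmx Q0 = Q0.
    by apply/matrixP => i j; rewrite adjmxE !mxE rmorph_nat andbC.
  by rewrite /Q0 mul_delta_mx.
have nz : rho Q0 != 0.
  apply/eqP => h; have := Hfaith Q0; rewrite HQ h => /(_ erefl) /matrixP /(_ ord0 ord0).
  by rewrite !mxE eqxx /= => /eqP; rewrite oner_eq0.
have lam1 : lam = 1.
  have := Hinv Q0; rewrite Hsig rhoZ => h.
  apply/eqP; rewrite -subr_eq0; apply/eqP; apply: (mulIf nz).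
  by rewrite mul0r mulrBl h mul1r subrr.
have colA : forall z i, A z i ord0 = \sum_(k < g'.+1) Acoef k i ord0 * z ^+ k.
  move=> z i; rewrite /A /loop_eval summxE; apply: eq_bigr => k _.
  by rewrite mxE mulrC.
have Hcol : forall z : R[i], on_circle z ->
   \sum_i (\sum_(k < g'.+1) Acoef k i ord0 * z ^+ k) *
           (\sum_(k < g'.+1) Acoef k i ord0 * z ^+ k)^* = 1.
  move=> z hz; have [_ h2] := Hun z hz.
  move/matrixP: h2 => /(_ ord0 ord0); rewrite [LHS]mxE [RHS]mxE eqxx /= mulr1n => h.
  rewrite -h; apply: eq_bigr => i _; by rewrite adjmxE colA mulrC.
have HS := @col_norm R g' _ (fun k i => Acoef k i ord0) Hcol.
have Hz := @sum_tail0 R g' _ (fun k i => Acoef k i ord0) HS lam1.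
have col0 : forall z i, A z i ord0 = Acoef 0%N i ord0.
  move=> z i; rewrite colA big_ord_recl big1 ?addr0 ?expr0 ?mulr1 // => k _.
  by rewrite Hz ?mul0r.
have c1 : on_circle (1 : R[i]) by rewrite /on_circle normr1.
have [u1 u2] := Hun 1 c1.
pose U z := adjmx (A 1) *m A z.
have U10 : forall z i, U z i ord0 = (i == ord0)%:R.
  move=> z i; transitivity ((adjmx (A 1) *m A 1) i ord0).
    by rewrite /U mxE [RHS]mxE; apply: eq_bigr => j _; rewrite !col0.
  by rewrite u2 mxE.
have Uun : forall z, on_circle z -> unitary_mx (U z).
  by move=> z hz; apply: unitary_mul; [apply: unitary_adj | apply: Hun].
have U0j : forall z, on_circle z -> forall j, U z ord0 j = (j == ord0)%:R.
  move=> z hz j; case: (eqVneq j ord0) => [->|jn]; first by rewrite U10.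
  have [h1 _] := Uun z hz; move/matrixP: h1 => /(_ ord0 ord0).
  rewrite [LHS]mxE [RHS]mxE eqxx /= mulr1n.
  under eq_bigr do rewrite adjmxE.
  rewrite (bigD1 ord0) //= U10 eqxx /= mulr1n rmorph1 mulr1 => h.
  have h2 : \sum_(l < n.+2 | l != ord0) U z ord0 l * (U z ord0 l)^* = 0.
    by move: h => /(congr1 (fun x => x - 1)); rewrite addrC addrK subrr.
  have := psumr_eq0P (fun l _ => mul_conjC_ge0 _) h2 jn.
  by move/eqP; rewrite mul_conjC_eq0 => /eqP ->.
pose B z := drsubmx (U z : 'M_(1 + n.+1)).
have Ublk : forall z, on_circle z -> (U z : 'M_(1 + n.+1)) = block_mx 1%:M 0 0 (B z).
  by move=> z hz; apply: blk_decomp => [i|j]; [apply: U10 | apply: U0j].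
apply: Hpnd.
exists 1%N, n.+1, 0%N, (addn0 (1 + n.+1)); split; first by left.
exists (fun _ => 1%:M), B, (fun _ => 0), (A 1).
split.
  exists 1%:M, (fun _ => 0%N); split; first by split; rewrite adjmx1 mulmx1.
  by move=> z _; apply/matrixP => i j; rewrite mul1mx !mxE expr0.
split.
  exists 1%:M, (fun _ => 0%N); split.
    by split; apply/matrixP => -[].
  by move=> z _; apply/matrixP => -[].
split.
  split.
    exists g'.+1, (fun k => drsubmx (adjmx (A 1) *m Acoef k : 'M_(1 + n.+1))).
    move=> z hz; rewrite /B /U /A /loop_eval mulmx_sumr drsub_sum.
    by apply: eq_bigr => k _; rewrite -scalemxAr drsubZ.
  move=> z hz; apply: blk_unitary; rewrite -Ublk //; exact: Uun.
split; first exact: Hun.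
move=> z hz; rewrite /block_diag3 castmx_blk0 -Ublk // /U mulmxA u1 mul1mx.
by [].
Qed.
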